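(* Let $Q$ and $P$ be probability measures on the Borel $\sigma$-algebra of $\mathbb{R}$ with $P \gg Q$, both having densities, such that $r = dQ/dP$ is unimodal and $\sup_{x\in\mathbb{R}} r(x) < \infty$. Let $\Phi$ be the CDF of $P$ and define the measures $P' = P\circ\Phi^{-1}$ and $Q' = Q\circ \Phi^{-1}$ on $[0,1]$ (i.e. $P'(A) = P(\Phi^{-1}(A))$, $Q'(A) = Q(\Phi^{-1}(A))$). Then $P'$ is the uniform measure on $[0,1]$, the Radon–Nikodym derivative $dQ'/dP'$ is unimodal, and $$\log \sup_{z\in[0,1]} \frac{dQ'}{dP'}(z) = \log\sup_{x\in\mathbb{R}} \frac{dQ}{dP}(x).$$
   Context: A function $f$ on an interval is unimodal if there is a point $x^*$ such that $f$ is non-decreasing to the left of $x^*$ and non-increasing to the right of $x^*$. *)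

(* Defs.v *)
From HB Require Import structures.
From mathcomp Require Import all_boot all_order all_algebra.
From mathcomp Require Import all_classical all_reals all_analysis.
From mathcomp Require Import measurable_realfun.
Set Implicit Arguments. Unset Strict Implicit. Unset Printing Implicit Defensive.
Import Order.TTheory GRing.Theory Num.Theory.
Local Open Scope classical_set_scope.
Local Open Scope ring_scope.

Definition unimodal (R : realType) (D : set R) (f : R -> R) : Prop :=
  exists2 m, D m &
    forall x y, D x -> D y -> x <= y ->
      (y <= m -> f x <= f y) /\ (m <= x -> f y <= f x).

Definition cdfP (R : realType) (P : probability R R) (x : R) : R :=
  fine (P `]-oo, x]%classic).

Lemma cdfP_nondecreasing (R : realType) (P : probability R R) :
  nondecreasing_fun (cdfP P).
Proof.
move=> x y xy; rewrite /cdfP fine_le ?fin_num_measure//.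
apply: le_measure; rewrite ?inE//.
by move=> z /=; rewrite !in_itv/= => /le_trans; apply.
Qed.

Lemma measurable_cdfP (R : realType) (P : probability R R) :
  measurable_fun [set: R] (cdfP P).
Proof. exact: nondecreasing_measurable (cdfP_nondecreasing P). Qed.

HB.instance Definition _ (R : realType) (P : probability R R) :=
  isMeasurableFun.Build _ _ R R (cdfP P) (measurable_cdfP P).

(* Main.v *)
Require Import Defs.
From HB Require Import structures.
From mathcomp Require Import all_boot all_order all_algebra.
From mathcomp Require Import all_classical all_reals all_analysis.
From mathcomp Require Import lra measurable_realfun.
Import Order.TTheory GRing.Theory Num.Theory.
Import numFieldNormedType.Exports.
Local Open Scope classical_set_scope.
Local Open Scope ring_scope.

Section Phi.
Context (R : realType) (P : probability R R).
Hypothesis hP : P `<< (@lebesgue_measure R).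

Local Notation Phi := (cdfP P).

Lemma PhiE x : (Phi x)%:E = P `]-oo, x]%classic.
Proof. by rewrite /cdfP fineK// fin_num_measure. Qed.

Lemma Phi_ge0 x : 0 <= Phi x.
Proof. by rewrite -lee_fin PhiE. Qed.

Lemma Phi_le1 x : Phi x <= 1.
Proof. by rewrite -lee_fin PhiE probability_le1. Qed.

Lemma P_set1 x : P [set x] = 0%E.
Proof.
apply: (hP [set x]) => // A mA Ax.
apply/eqP; rewrite eq_le measure_ge0 andbT -(lebesgue_measure_set1 x).
by apply: le_measure => //; rewrite inE.
Qed.

Lemma Phi_itv a b : a <= b -> ((Phi b - Phi a)%:E = P `]a, b]%classic)%E.
Proof.
move=> ab; rewrite EFinB !PhiE.
have -> : `]-oo, b]%classic = `]-oo, a]%classic `|` `]a, b]%classic :> set R.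
  by apply: itv_bndbnd_setU; rewrite bnd_simp.
rewrite measureU//; last first.
  apply/seteqP; split => z //=; rewrite !in_itv/= => -[] za /andP[] /(le_lt_trans za).
  by rewrite ltxx.
by rewrite addeAC subee ?add0e// fin_num_measure.
Qed.


Lemma Phi_cont : continuous (Phi : R -> R).
Proof.
move=> x.
pose F n := `]x - n.+1%:R^-1, x + n.+1%:R^-1]%classic : set R.
have capE : \bigcap_n F n = [set x].
  apply/seteqP; split => [y Fy|y ->{y} n _]; last first.
    by rewrite /F/= in_itv/= lerDl ltrBlDr ltrDl invr_ge0 invr_gt0 ler0n ltr0n.
  apply/eqP; rewrite -subr_eq0 -normr_eq0; apply/negPn/negP => yx.
  have yx0 : 0 < `|y - x| by rewrite lt_neqAle eq_sym yx normr_ge0.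
  have := truncnS_gt (`|y - x|^-1).
  move: (Num.Def.trunc _) => n hn.
  have := Fy n I; rewrite /F/= in_itv/= => /andP[h1 h2].
  have : `|y - x| <= n.+1%:R^-1.
    set d := n.+1%:R^-1 in h1 h2 *.
    by rewrite ler_norml; apply/andP; split; lra.
  rewrite -(invrK `|y - x|) lef_pV2 ?posrE ?invr_gt0 ?ltr0n//.
  by rewrite leNgt hn.
have h : P \o F @ \oo --> P (\bigcap_n F n).
  apply: nonincreasing_cvg_mu => //.
  - by apply: (le_lt_trans (probability_le1 _ _)); [exact: measurable_itv|exact: ltry].
  - by move=> i; exact: measurable_itv.
  - by rewrite capE.
  - move=> m n mn; apply/subsetPset => z; rewrite /F/= !in_itv/= => /andP[h1 h2].
    have hmn : n.+1%:R^-1 <= m.+1%:R^-1 :> R by rewrite lef_pV2 ?posrE ?ltr0n// ler_nat.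
    apply/andP; split; first by rewrite (le_lt_trans _ h1)// lerB.
    by rewrite (le_trans h2)// lerD.
rewrite capE P_set1 in h.
apply/cvgrPdist_lt => e e0.
have [N _ HN] := cvgr_lt 0 (fine_cvg h) e e0.
have {HN} HN := HN N (leqnn N).
rewrite /= in HN.
have PFN : (P (F N) < e%:E)%E.
  by rewrite -[P (F N)]fineK ?fin_num_measure ?lte_fin//; exact: measurable_itv.
apply/nbhs_ballP; exists (N.+1%:R^-1); first by rewrite /= invr_gt0 ltr0n.
move=> t; rewrite /ball /= => xt.
rewrite -lte_fin; apply: le_lt_trans PFN.
have xt1 := xt; rewrite ltr_norml in xt1; case/andP: xt1 => xt1 xt2.
have hd : 0 < N.+1%:R^-1 :> R by rewrite invr_gt0 ltr0n.
set d := N.+1%:R^-1 in xt xt1 xt2 hd *.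
have [tx|xt'] := leP x t.
  rewrite distrC ger0_norm ?subr_ge0 ?cdfP_nondecreasing// Phi_itv//.
  apply: le_measure; rewrite ?inE; [exact: measurable_itv|exact: measurable_itv|].
  move=> z; rewrite /F/= !in_itv/= => /andP[h1 h2].
  by apply/andP; split; rewrite -/d; lra.
rewrite ger0_norm; last by rewrite subr_ge0 cdfP_nondecreasing// ltW.
rewrite Phi_itv; last exact: ltW.
apply: le_measure; rewrite ?inE; [exact: measurable_itv|exact: measurable_itv|].
move=> z; rewrite /F/= !in_itv/= => /andP[h1 h2].
by apply/andP; split; rewrite -/d; lra.
Qed.

Definition idTR : R -> R := idfun.
#[local] HB.instance Definition _ :=
  @isMeasurableFun.Build _ _ _ _ idTR (@measurable_id _ _ setT).

Lemma Phi_Ny0 : Phi x @[x --> -oo] --> (0:R).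
Proof. exact: (fine_cvg (@cvg_cdfNy0 _ _ _ P idTR)). Qed.

Lemma Phi_y1 : Phi x @[x --> +oo] --> (1:R).
Proof. exact: (fine_cvg (@cvg_cdfy1 _ _ _ P idTR)). Qed.

Lemma Phi_lt t : 0 < t -> exists a, Phi a < t.
Proof.
move=> t0; have := cvgr_lt 0 Phi_Ny0 t t0.
case=> M [_ HM]; exists (M - 1); apply: HM; lra.
Qed.

Lemma Phi_gt t : t < 1 -> exists b, t < Phi b.
Proof.
move=> t1; have := cvgr_gt 1 Phi_y1 t t1.
case=> M [_ HM]; exists (M + 1); apply: HM; lra.
Qed.

Lemma Phi_surj t : 0 < t < 1 -> exists x, Phi x = t.
Proof.
case/andP=> t0 t1.
have [a ha] := Phi_lt _ t0; have [b hb] := Phi_gt _ t1.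
have ab : a <= b.
  have [//|ba] := leP a b.
  have := cdfP_nondecreasing P (ltW ba); lra.
have [c _ hc] : exists2 c, c \in `[a, b] & Phi c = t.
  apply: IVT => //; first exact: continuous_subspaceT Phi_cont.
  by rewrite ge_min le_max (ltW ha) (ltW hb) orbT.
by exists c.
Qed.

Lemma mPhi A : measurable A -> measurable (Phi @^-1` A).
Proof. by move=> mA; rewrite -[X in measurable X]setTI; exact: measurable_cdfP. Qed.

Lemma P_fin A : measurable A -> (fine (P A))%:E = P A.
Proof. by move=> mA; rewrite fineK// fin_num_measure. Qed.

Lemma PPhi_le t : 0 < t < 1 -> P (Phi @^-1` `]-oo, t]) = t%:E.
Proof.
case/andP=> t0 t1.
have mA : measurable (Phi @^-1` `]-oo, t]) by apply: mPhi; exact: measurable_itv.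
rewrite -P_fin//; congr EFin.
set p := fine _.
have [x hx] : exists x, Phi x = t by apply: Phi_surj; rewrite t0 t1.
have p_ge : t <= p.
  rewrite -lee_fin /p P_fin// -{1}hx PhiE; apply: le_measure; rewrite ?inE//.
  by move=> y /=; rewrite !in_itv/= => yx; rewrite -hx cdfP_nondecreasing.
have p_le s : t < s < 1 -> p <= s.
  move=> /andP[ts s1].
  have [x' hx'] : exists x, Phi x = s by apply: Phi_surj; rewrite (lt_trans t0 ts) s1.
  rewrite -lee_fin /p P_fin// -hx' PhiE; apply: le_measure; rewrite ?inE//.
  move=> y /=; rewrite !in_itv/= => yt.
  have [//|x'y] := leP y x'.
  have := cdfP_nondecreasing P (ltW x'y); lra.
apply/eqP; rewrite eq_le p_ge andbT.
have p1 : p <= 1 by rewrite -lee_fin /p P_fin// probability_le1.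
rewrite leNgt; apply/negP => tp.
have := p_le ((t + p) / 2) (ltac:(apply/andP; split; lra)); lra.
Qed.

Lemma PPhi_lt t : 0 < t <= 1 -> P (Phi @^-1` `]-oo, t[) = t%:E.
Proof.
case/andP=> t0 t1.
have mA : measurable (Phi @^-1` `]-oo, t[) by apply: mPhi; exact: measurable_itv.
rewrite -P_fin//; congr EFin.
set p := fine _.
have p1 : p <= 1 by rewrite -lee_fin /p P_fin// probability_le1.
have p0 : 0 <= p by rewrite -lee_fin /p P_fin// measure_ge0.
have p_ge s : 0 < s < t -> s <= p.
  move=> /andP[s0 st].
  rewrite -lee_fin /p P_fin// -PPhi_le; last by rewrite s0 (lt_le_trans st t1).
  apply: le_measure; rewrite ?inE//; first by apply: mPhi; exact: measurable_itv.
  by move=> y /=; rewrite !in_itv/= => ys; rewrite (le_lt_trans ys).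
have p_le : p <= t.
  have [t_1|t_1] := eqVneq t 1; first by rewrite t_1.
  have t1' : t < 1 by rewrite lt_neqAle t_1 t1.
  rewrite -lee_fin /p P_fin// -PPhi_le; last by rewrite t0 t1'.
  apply: le_measure; rewrite ?inE//; first by apply: mPhi; exact: measurable_itv.
  by move=> y /=; rewrite !in_itv/= => /ltW.
apply/eqP; rewrite eq_le p_le /=.
rewrite leNgt; apply/negP => pt.
have := p_ge ((t + p) / 2) (ltac:(apply/andP; split; lra)); lra.
Qed.

Lemma unif_lt t : 0 < t <= 1 ->
  uniform_prob (@ltr01 R) `]-oo, t[%classic = t%:E.
Proof.
case/andP=> t0 t1.
rewrite /uniform_prob integral_uniform_pdf.
have -> : `]-oo, t[%classic `&` `[0, 1]%classic = `[0, t[%classic :> set R.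
  apply/seteqP; split => z /=; rewrite !in_itv/=.
    by move=> [zt /andP[z0 z1]]; rewrite z0 zt.
  by move=> /andP[z0 zt]; rewrite zt z0 (le_trans (ltW zt)).
rewrite (eq_integral (fun=> 1%:E)); last first.
  move=> z; rewrite inE/= in_itv/= => /andP[z0 zt].
  by rewrite /uniform_pdf z0 (le_trans (ltW zt))// subr0 invr1.
by rewrite integral_cst//= mul1e lebesgue_measure_itv/= lte_fin t0 oppr0 adde0.
Qed.

Lemma unif_lt0 t : t <= 0 -> uniform_prob (@ltr01 R) `]-oo, t[%classic = 0%E.
Proof.
move=> t0; rewrite /uniform_prob integral_uniform_pdf.
have -> : `]-oo, t[%classic `&` `[0, 1]%classic = set0 :> set R.
  apply/seteqP; split => z //=; rewrite !in_itv/=.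
  move=> [zt /andP[z0 z1]]; lra.
by rewrite integral_set0.
Qed.

Lemma unif_gt1 t : 1 < t -> uniform_prob (@ltr01 R) `]-oo, t[%classic = 1%E.
Proof.
move=> t1; rewrite /uniform_prob integral_uniform_pdf1// => z /=.
rewrite !in_itv/= => /andP[_ z1]; lra.
Qed.

Lemma PPhi_G t : distribution P Phi `]-oo, t[%classic =
  uniform_prob (@ltr01 R) `]-oo, t[%classic.
Proof.
rewrite /distribution /pushforward /=.
have [t0|t0] := leP t 0.
  rewrite unif_lt0// -(measure0 P); congr (P _).
  apply/seteqP; split => z //=; rewrite in_itv/= => zt.
  have := Phi_ge0 z; lra.
have [t1|t1] := leP t 1.
  by rewrite unif_lt ?t0// PPhi_lt// t0.
rewrite unif_gt1// -(probability_setT P); congr (P _).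
apply/seteqP; split => z //= _; rewrite in_itv/=.
have := Phi_le1 z; lra.
Qed.

Definition idUR : measurableTypeR R -> R := idfun.
#[local] HB.instance Definition _ :=
  @isMeasurableFun.Build _ _ _ _ idUR (@measurable_id _ _ setT).

Lemma part1 A : measurable A ->
  distribution P Phi A = uniform_prob (@ltr01 R) A.
Proof.
move=> mA.
have -> : uniform_prob (@ltr01 R) A = distribution (uniform_prob (@ltr01 R)) idUR A by [].
apply: (@g_sigma_algebra_measure_unique _ _ _ (@RGenInftyO.G R) _
   (fun n => `]-oo, n%:R[%classic)).
- by move=> _ [x ->]; exact: measurable_itv.
- by move=> n; exists n%:R.
- apply/seteqP; split => // z _.
  exists (Num.Def.trunc `|z|).+1 => //=; rewrite in_itv/=.
  exact: le_lt_trans (ler_norm z) (truncnS_gt _).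
- move=> _ _ [x ->] [y ->]; exists (Num.min x y).
  apply/seteqP; split => z /=; rewrite !in_itv/= ?lt_min.
    by move=> [-> ->].
  by move=> /andP[-> ->].
- by move=> _ [x ->]; exact: PPhi_G.
- move=> n; apply: (le_lt_trans (probability_le1 _ _)) => //; exact: ltry.
- suff : ((@ocitv R).-sigma.-measurable A) by rewrite RGenInftyO.measurableE; move: mA.
  move: A mA; apply: smallest_sub => //; first exact: smallest_sigma_algebra.
  by move=> X hX; exact: sub_sigma_algebra.
Qed.

Definition qPhi z := inf [set x | z <= Phi x].

Lemma qE_ne z : 0 < z < 1 -> [set x | z <= Phi x] !=set0.
Proof. by move=> hz; have [x hx] := Phi_surj _ hz; exists x => /=; rewrite hx. Qed.

Lemma qE_lb z : 0 < z -> has_lbound [set x | z <= Phi x].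
Proof.
move=> z0; have [a ha] := Phi_lt _ z0; exists a => y /= hy.
have [//|ya] := leP a y.
have := cdfP_nondecreasing P (ltW ya); lra.
Qed.

Lemma q_le z x : 0 < z -> z <= Phi x -> qPhi z <= x.
Proof. by move=> z0 hx; apply: ge_inf => //; exact: qE_lb. Qed.

Lemma q_ge z y : 0 < z < 1 -> (forall x, z <= Phi x -> y <= x) -> y <= qPhi z.
Proof. by move=> hz hy; apply: lb_le_inf; [exact: qE_ne|move=> x /hy]. Qed.

Lemma q_mono z1 z2 : 0 < z1 -> z1 <= z2 -> z2 < 1 -> qPhi z1 <= qPhi z2.
Proof.
move=> z10 z12 z21; apply: q_ge; first by rewrite (lt_le_trans z10 z12).
by move=> x hx; apply: q_le => //; exact: le_trans hx.
Qed.

Lemma q_lt_ex z y : 0 < z < 1 -> qPhi z < y -> exists2 e, z <= Phi e & e < y.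
Proof. by move=> hz /(inf_lt (qE_ne _ hz)) [e /= he ey]; exists e. Qed.

Lemma mq : measurable_fun (`]0, 1[%classic : set R) qPhi.
Proof.
apply: (measurability (@RGenCInfty.G R)) => [|/= _ [_] [y] -> <-].
  exact: RGenCInfty.measurableE.
apply: is_interval_measurable => s t /= [].
rewrite !in_itv/= !andbT => /andP[s0 s1] ys [] /andP[t0 t1] yt z /andP[sz zt].
have z0 : 0 < z by exact: lt_le_trans sz.
have z1 : z < 1 by exact: le_lt_trans t1.
split; first by rewrite in_itv/= z0 z1.
rewrite in_itv/= andbT (le_trans ys)//.
by apply: q_mono.
Qed.

Lemma PPhi_set1 u : P (Phi @^-1` [set u]) = 0%E.
Proof.
have := part1 _ (measurable_set1 u); rewrite /distribution /pushforward /= => ->.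
have H : (@lebesgue_measure R).-null_set [set u].
  move=> A mA Au; apply/eqP; rewrite eq_le measure_ge0 andbT.
  by rewrite -(lebesgue_measure_set1 u); apply: le_measure; rewrite ?inE.
apply: (dominates_uniform_prob (@ltr01 R) H) => //.
Qed.

Lemma PPhi_le_bound u : 0 <= u -> (P (Phi @^-1` `]-oo, u]) <= u%:E)%E.
Proof.
move=> u0.
have mA : measurable (Phi @^-1` `]-oo, u]) by apply: mPhi; exact: measurable_itv.
have [u1|u1] := leP 1 u.
  by apply: le_trans (probability_le1 _ _) _ => //; rewrite lee_fin.
have [u_0|u_0] := eqVneq u 0.
  subst u; apply: (le_trans (y := P (Phi @^-1` [set 0]))); last by rewrite PPhi_set1.
  apply: le_measure; rewrite ?inE//.
  by move=> x /=; rewrite in_itv/= => hx; apply/eqP; rewrite eq_le hx Phi_ge0.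
by rewrite PPhi_le// u1 lt_neqAle eq_sym u_0 u0.
Qed.

Definition Bs s := `]s, +oo[%classic `&` Phi @^-1` `]-oo, Phi s].

Lemma mBs s : measurable (Bs s).
Proof. by apply: measurableI; [exact: measurable_itv|apply: mPhi; exact: measurable_itv]. Qed.

Lemma Bs_null s : P (Bs s) = 0%E.
Proof.
have h : (P (Bs s) + P `]-oo, s]%classic <= P `]-oo, s]%classic)%E.
  rewrite -measureU; first last.
  - apply/seteqP; split => // z [[]]; rewrite /= !in_itv/= andbT => sz _ zs.
    by move: (lt_le_trans sz zs); rewrite ltxx.
  - exact: measurable_itv.
  - exact: mBs.
  apply: (le_trans (y := P (Phi @^-1` `]-oo, Phi s]))).
    apply: le_measure; rewrite ?inE.
    - by apply: measurableU; [exact: mBs|exact: measurable_itv].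
    - by apply: mPhi; exact: measurable_itv.
    move=> z [[_ hz]//|]; rewrite /= !in_itv/= => zs.
    by rewrite cdfP_nondecreasing.
  by rewrite -PhiE PPhi_le_bound// Phi_ge0.
move: h; rewrite -[X in (_ <= X)%E]add0e leeD2rE ?fin_num_measure//.
by move=> h; apply/eqP; rewrite eq_le h measure_ge0.
Qed.

Definition Nset : set R := \bigcup_n
  (match (unpickle n : option rat) with Some q => Bs (ratr q) | None => set0 end).

Lemma Nset_negl : P.-negligible Nset.
Proof.
apply: negligible_bigcup => n; case: (unpickle n) => [q|].
  by exists (Bs (ratr q)); split => //; [exact: mBs|exact: Bs_null].
by exists set0; split => //; rewrite measure0.
Qed.

Lemma Phi1_negl u : P.-negligible (Phi @^-1` [set u]).
Proof.
exists (Phi @^-1` [set u]); split => //.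
exact: PPhi_set1.
Qed.

Lemma ae_key c : P.-negligible
  [set x | ~ [/\ 0 < Phi x, Phi x < 1, Phi x != c & qPhi (Phi x) = x]].
Proof.
apply: (negligibleS _ (negligibleU (negligibleU (negligibleU (Phi1_negl 0)
  (Phi1_negl 1)) (Phi1_negl c)) Nset_negl)).
move=> x /= hx.
have [x0|x0] := leP (Phi x) 0.
  by left; left; left; apply/eqP; rewrite eq_le x0 Phi_ge0.
have [x1|x1] := leP 1 (Phi x).
  by left; left; right; apply/eqP; rewrite eq_le x1 Phi_le1.
have [xc|xc] := eqVneq (Phi x) c; first by left; right.
right.
have qx : qPhi (Phi x) < x.
  have hle : qPhi (Phi x) <= x by apply: q_le.
  by rewrite lt_neqAle hle andbT; apply/eqP => hq; apply: hx; split.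
have [e he ex] := q_lt_ex (Phi x) x (ltac:(by rewrite x0 x1)) qx.
have [q] := rat_in_itvoo ex; rewrite in_itv/= => /andP[hq1 hq2].
exists (pickle q); first by [].
rewrite pickleK /Bs; split; first by rewrite /= in_itv/= andbT.
rewrite /= in_itv/= (le_trans he)//.
by apply: cdfP_nondecreasing; exact: ltW.
Qed.

End Phi.

Theorem mainTheorem2 (R : realType) (P Q : probability R R) (r : R -> R) :
  P `<< (@lebesgue_measure R) ->
  Q `<< (@lebesgue_measure R) ->
  Q `<< P ->
  measurable_fun [set: R] r ->
  (forall x, 0 <= r x) ->
  (forall A, measurable A -> Q A = (\int[P]_(x in A) (r x)%:E)%E) ->
  unimodal [set: R] r ->
  has_ubound (range r) ->
  (forall A, measurable A ->
     distribution P (cdfP P) A = uniform_prob (@ltr01 R) A) /\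
  exists r' : R -> R,
    [/\ measurable_fun [set: R] r',
        (forall z, 0 <= r' z),
        (forall A, measurable A ->
           distribution Q (cdfP P) A =
           (\int[distribution P (cdfP P)]_(z in A) (r' z)%:E)%E),
        unimodal `[0, 1]%classic r' &
        ln (sup (r' @` `[0, 1]%classic)) = ln (sup (range r))].
Proof.
move=> hP _ _ mr r0 hQr [m _ hm] hub.
split; first by move=> A mA; exact: part1 _ _ hP _ mA.
set S := sup (range r).
set c := cdfP P m.
have hrS x : r x <= S by apply: ub_le_sup => //; exists x.
have S0 : 0 <= S := le_trans (r0 0) (hrS 0).
have c0 : 0 <= c by exact: Phi_ge0.
have c1 : c <= 1 by exact: Phi_le1.
pose r' z := if z == c then S else if (0 < z) && (z < 1) then r (@qPhi R P z) else 0.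
have r'_le z : r' z <= S.
  by rewrite /r'; case: ifP => // _; case: ifP.
have r'_ge0 z : 0 <= r' z.
  by rewrite /r'; case: ifP => // _; case: ifP.
have r'c : r' c = S by rewrite /r' eqxx.
have mr' : measurable_fun setT r'.
- have meq : measurable_fun setT (fun z : R => z == c).
    by apply: measurable_fun_eqr => //; exact: measurable_cst.
  rewrite /r'; apply: measurable_fun_if => //.
  apply: measurable_fun_if => //; first by apply: meq.
  + apply: (measurable_funS (E := setT)) => //.
    apply: measurable_and; apply: measurable_fun_ltr => //; exact: measurable_cst.
  + apply: (measurable_funS (E := (`]0, 1[%classic : set R))); first exact: measurable_itv.
      by move=> z [_ h]; rewrite /= in_itv.
    exact: measurableT_comp mr (mq _ _ hP).
exists r'; split => //.
- move=> A mA.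
  have mPA : measurable (cdfP P @^-1` A) by exact: mPhi.
  have mr'A : measurable_fun A (fun z => (r' z)%:E).
    by apply/measurable_EFinP; exact: measurable_funS mr'.
  have -> : (\int[distribution P (cdfP P)]_(z in A) (r' z)%:E =
     \int[P]_(x in cdfP P @^-1` A) ((fun z => (r' z)%:E) \o cdfP P) x)%E.
    apply: (ge0_integral_pushforward (measurable_cdfP P) P mA mr'A).
    by move=> z _; rewrite lee_fin.
  transitivity (Q (cdfP P @^-1` A)); first by [].
  rewrite hQr//; apply: ae_eq_integral => //.
  + by apply/measurable_EFinP; exact: measurable_funS mr.
  + apply/measurable_EFinP; apply: (measurable_funS (E := setT)) => //.
    exact: measurableT_comp mr' (measurable_cdfP P).
  + apply: (negligibleS _ (ae_key _ _ hP c)) => x /= hx [h0 h1 hc hq].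
    by apply: hx => _; rewrite /= /r' (negbTE hc) h0 h1 hq.
- have cI : `[0, 1]%classic c by rewrite /= in_itv/= c0 c1.
  exists c => // x y; rewrite /= !in_itv/= => /andP[x0 x1] /andP[y0 y1] xy; split.
  + move=> yc.
    have [->|ync] := eqVneq y c; first by rewrite r'c r'_le.
    have ylt : y < c by rewrite lt_neqAle ync yc.
    have y1' : y < 1 by exact: lt_le_trans ylt c1.
    rewrite /r' (lt_eqF (le_lt_trans xy ylt)) (lt_eqF ylt).
    case: (boolP (0 < x)) => hx0 /=; last first.
      by case: ifP => // _; exact: r0.
    rewrite (lt_le_trans hx0 xy) (le_lt_trans xy y1') y1' /=.
    apply: (hm _ _ I I (@q_mono R P hP x y hx0 xy y1')).1.
    by apply: (@q_le R P y m) => //; exact: lt_le_trans xy.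
  + move=> cx.
    have [->|xnc] := eqVneq x c; first by rewrite r'c r'_le.
    have cx' : c < x by rewrite lt_neqAle eq_sym xnc cx.
    have x0' : 0 < x by exact: le_lt_trans c0 cx'.
    rewrite /r' (gt_eqF cx') (gt_eqF (lt_le_trans cx' xy)) x0' (lt_le_trans x0' xy) /=.
    case: (boolP (y < 1)) => hy1 /=; last by case: ifP => // _; exact: r0.
    have hx1 : x < 1 by exact: le_lt_trans xy hy1.
    rewrite hx1.
    apply: (hm _ _ I I (@q_mono R P hP x y x0' xy hy1)).2.
    apply: (@q_ge R P hP x m); first by rewrite x0' hx1.
    move=> e he; rewrite leNgt; apply/negP => em.
    have := cdfP_nondecreasing P (ltW em); rewrite -/c => hec.
    have := lt_le_trans (lt_le_trans cx' he) hec; rewrite ltxx.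
    done.
- have cI : `[0, 1]%classic c by rewrite /= in_itv/= c0 c1.
  congr ln; apply/eqP; rewrite eq_le; apply/andP; split.
    apply: ge_sup; first by exists (r' c), c.
    by move=> _ [z _ <-]; exact: r'_le.
  apply: ub_le_sup; last by exists c.
  by exists S => _ [z _ <-]; exact: r'_le.
Qed.
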